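(* Let $n\ge2$ and suppose $\Omega\subset\mathbb R^n$ is a globally $n$-regular domain. Let $\alpha\in(-n,0)$ and $\phi:[0,\infty)\to[0,\infty)$ be a Young function satisfying $\underline\Lambda_\phi(\alpha)<\infty$ and $\overline\Lambda_\phi(\alpha)<\infty$. Then there exist constants $C_1,C_2>0$ depending on $n,\alpha,\phi,\Omega$ such that $$\int_{\Omega\setminus E}\frac{\phi(t|x-y|^{-\alpha})}{|x-y|^{2n}}\,dy\ge C_1\frac1{|E|}\frac{|\Omega\setminus E|}{|\Omega|}\phi\big(C_2t|E|^{|\alpha|/n}\big)$$ whenever $t>0$, $x\in\Omega$ and $E\subset\Omega$ is measurable with $0<|E|<\infty$. Here, if $|\Omega|=\infty$, the ratio $\frac{|\Omega\setminus E|}{|\Omega|}$ is interpreted as $1$.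
   Context: A Young function is $\phi\in C([0,\infty))$, convex, with $\phi(0)=0$, $\phi(t)>0$ for $t>0$, $\lim_{t\to\infty}\phi(t)=\infty$. $\underline\Lambda_\phi(\alpha):=\sup_{x>0}\int_0^1\frac{\phi(t^{1-\alpha}x)}{\phi(x)}\frac{dt}{t^{n+1}}$, $\overline\Lambda_\phi(\alpha):=\sup_{x>0}\int_1^\infty\frac{\phi(t^{-\alpha}x)}{\phi(x)}\frac{dt}{t^{n+1}}$. A domain $\Omega$ is globally $n$-regular if there is $\theta\in(0,1)$ with $|B(x,r)\cap\Omega|\ge\theta r^n$ for all $x\in\Omega$ and all $0<r<2\operatorname{diam}\Omega$. *)

(* Defs.v *)
From HB Require Import structures.
From mathcomp Require Import all_boot all_order all_algebra.
From mathcomp Require Import all_classical all_reals all_analysis.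
Set Implicit Arguments. Unset Strict Implicit. Unset Printing Implicit Defensive.
Import Order.TTheory GRing.Theory Num.Theory.
Import numFieldNormedType.Exports.
Local Open Scope classical_set_scope.
Local Open Scope ring_scope.

Definition Rn (R : realType) (n : nat) := 'rV[R]_n.
HB.instance Definition _ (R : realType) n := Pointed.on (Rn R n).

Section discrete.
Variables (R : realType) (n : nat).
Definition Rn_all : set (set (Rn R n)) := setT.
Lemma Rn_all0 : Rn_all set0. Proof. by []. Qed.
Lemma Rn_allC A : Rn_all A -> Rn_all (~` A). Proof. by []. Qed.
Lemma Rn_allU (F : (set (Rn R n))^nat) : (forall i, Rn_all (F i)) ->
  Rn_all (\bigcup_i F i). Proof. by []. Qed.
End discrete.

HB.instance Definition _ (R : realType) n := @isMeasurable.Build default_measure_display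
  (Rn R n) (@Rn_all R n) (@Rn_all0 R n) (@Rn_allC R n) (@Rn_allU R n).

Local Open Scope ereal_scope.
Section lebesgue_outer.
Variables (R : realType) (n : nat).

Definition box (a b : 'rV[R]_n) : set (Rn R n) :=
  [set x : 'rV[R]_n | forall i, (a ord0 i <= x ord0 i < b ord0 i)%R].

Definition boxvol (a b : 'rV[R]_n) : R :=
  (\prod_(i < n) Num.max (b ord0 i - a ord0 i) 0)%R.

(** elementary volume: volume of a box, 0 on the empty set, +oo otherwise *)
Definition boxpre (A : set (Rn R n)) : \bar R :=
  ereal_inf [set r : \bar R | (A = set0 /\ r = 0) \/
     exists a b, A = box a b /\ r = (boxvol a b)%:E].

Lemma boxvol_ge0 a b : (0 <= boxvol a b)%R.
Proof. by apply: prodr_ge0 => i _; rewrite le_max lexx orbT. Qed.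

Lemma boxpre_ge0 A : 0 <= boxpre A.
Proof.
apply: le_ereal_inf_tmp => r [[_ ->]//|[a [b [_ ->]]]].
by rewrite lee_fin boxvol_ge0.
Qed.

Lemma boxpre0 : boxpre set0 = 0.
Proof.
apply/eqP; rewrite eq_le boxpre_ge0 andbT.
by apply: ereal_inf_lbound; left.
Qed.

Definition leb_outer : set (Rn R n) -> \bar R := mu_ext boxpre.

HB.instance Definition _ := isOuterMeasure.Build R (Rn R n) leb_outer
  (mu_ext0 boxpre0 boxpre_ge0) (mu_ext_ge0 boxpre_ge0) (le_mu_ext boxpre)
  (mu_ext_sigma_subadditive boxpre_ge0).

End lebesgue_outer.

Notation LRn R n := (caratheodory_type (@leb_outer R n)).

(** n-dimensional Lebesgue measure: restriction of the Lebesgue outer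
    measure to the Caratheodory-measurable (= Lebesgue measurable) sets *)
Definition lebesgue_n (R : realType) (n : nat) : set (LRn R n) -> \bar R :=
  @leb_outer R n.

HB.instance Definition _ (R : realType) n := isMeasure.Build _ _ _
  (@lebesgue_n R n) (@caratheodory_measure0 R (Rn R n) (@leb_outer R n))
  (@caratheodory_measure_ge0 R (Rn R n) (@leb_outer R n))
  (@caratheodory_measure_sigma_additive R (Rn R n) (@leb_outer R n)).

Local Open Scope ring_scope.

Definition enorm (R : realType) (n : nat) (x : 'rV[R]_n) : R :=
  Num.sqrt (\sum_(i < n) x ord0 i ^+ 2).
Definition eucl_dist (R : realType) (n : nat) (x y : 'rV[R]_n) : R := enorm (x - y).

Definition eball (R : realType) (n : nat) (x : 'rV[R]_n) (r : R) : set (LRn R n) :=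
  [set y : 'rV[R]_n | eucl_dist x y < r].

Definition ediam (R : realType) (n : nat) (O : set (LRn R n)) : \bar R :=
  ereal_sup [set (eucl_dist x y)%:E | x in O & y in O].

Definition is_domain (R : realType) (n : nat) (O : set (LRn R n)) : Prop :=
  O !=set0 /\ open (O : set 'rV[R]_n) /\ connected (O : set 'rV[R]_n).

Definition globally_regular (R : realType) (n : nat) (O : set (LRn R n)) : Prop :=
  exists theta : R, 0 < theta < 1 /\
    forall x, O x -> forall r : R, 0 < r -> (r%:E < 2%:E * ediam O)%E ->
      ((theta * r ^+ n)%:E <= lebesgue_n (eball x r `&` O))%E.

(** Young function (only its values on [0,oo) matter) *)
Definition young_function (R : realType) (phi : R -> R) : Prop :=
  {within `[0, +oo[, continuous phi} /\
  (forall x y l : R, 0 <= x -> 0 <= y -> 0 <= l <= 1 ->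
      phi (l * x + (1 - l) * y) <= l * phi x + (1 - l) * phi y) /\
  phi 0 = 0 /\
  (forall t, 0 < t -> 0 < phi t) /\
  (phi t @[t --> +oo] --> +oo).

Definition Lambda_low (R : realType) (n : nat) (phi : R -> R) (alpha : R) : \bar R :=
  ereal_sup [set (\int[lebesgue_measure]_(t in `]0%R, 1%R[)
        ((phi (t `^ (1 - alpha) * x) / phi x) / t ^+ n.+1)%:E)%E
     | x in [set x : R | 0 < x]].

Definition Lambda_up (R : realType) (n : nat) (phi : R -> R) (alpha : R) : \bar R :=
  ereal_sup [set (\int[lebesgue_measure]_(t in `[1%R, +oo[)
        ((phi (t `^ (- alpha) * x) / phi x) / t ^+ n.+1)%:E)%E
     | x in [set x : R | 0 < x]].

Definition vol_ratio (R : realType) (n : nat) (O E : set (LRn R n)) : R :=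
  if lebesgue_n O \is a fin_num
  then fine (lebesgue_n (O `\` E)) / fine (lebesgue_n O) else 1.

(* Main.v *)
Require Import Defs.
From HB Require Import structures.
From mathcomp Require Import all_boot all_order all_algebra.
From mathcomp Require Import all_classical all_reals all_analysis.
From mathcomp Require Import ring lra.
Import Order.TTheory GRing.Theory Num.Theory.
Import numFieldNormedType.Exports.
Local Open Scope classical_set_scope.
Local Open Scope ring_scope.

Section S.
Variables (R : realType) (n : nat).

Local Open Scope ereal_scope.
Lemma boxpre_box (a b : 'rV[R]_n) : boxpre (box a b) <= (boxvol a b)%:E.
Proof. by apply: ereal_inf_lbound; right; exists a, b. Qed.

Lemma leb_outer_le_boxpre (A : set (Rn R n)) : leb_outer A <= boxpre A.
Proof.
apply: ereal_inf_lbound.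
exists (fun k => if k is 0%N then A else set0).
  split => //; by move=> y Ay; exists 0%N.
rewrite nneseries_recl //; last by move=> k _; exact: boxpre_ge0.
rewrite eseries0 ?adde0 //.
by move=> [|k] //= _ _; rewrite boxpre0.
Qed.

Lemma leb_outer_box (a b : 'rV[R]_n) : leb_outer (box a b) <= (boxvol a b)%:E.
Proof. exact: le_trans (leb_outer_le_boxpre _) (boxpre_box _ _). Qed.

Local Close Scope ereal_scope.
Definition hs (i : 'I_n) (c : R) : set (Rn R n) := [set y | y ord0 i < c].
Definition upd (v : 'rV[R]_n) i (c : R) : 'rV[R]_n :=
  \row_j (if j == i then c else v ord0 j).

Lemma updE v i c j : upd v i c ord0 j = if j == i then c else v ord0 j.
Proof. by rewrite mxE. Qed.

Lemma box_hs a b i c : box a b `&` hs i c = box a (upd b i (Num.min (b ord0 i) c)).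
Proof.
apply/seteqP; split => y /=.
  move=> [H yc] j; rewrite updE; case: eqP => [->|_]; last exact: H.
  by have /andP[-> ybi] := H i; rewrite lt_min ybi.
move=> H; split.
  move=> j; have := H j; rewrite updE; case: eqP => [->|_] //.
  by rewrite lt_min => /andP[-> /andP[]].
by have := H i; rewrite updE eqxx lt_min => /andP[_ /andP[]].
Qed.

Lemma box_nhs a b i c : box a b `&` ~` hs i c = box (upd a i (Num.max (a ord0 i) c)) b.
Proof.
apply/seteqP; split => y /=.
  move=> [H yc] j; rewrite updE; case: eqP => [->|_]; last exact: H.
  have /andP[ai ->] := H i; rewrite ge_max ai andbT /=.
  by rewrite leNgt; apply/negP.
move=> H; split.
  move=> j; have := H j; rewrite updE; case: eqP => [->|_] //.
  by rewrite ge_max => /andP[/andP[-> _] ->].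
by have := H i; rewrite updE eqxx ge_max => /andP[/andP[_ ci] _]; apply/negP; rewrite -leNgt.
Qed.

Lemma boxvol_split a b i c :
  boxvol a (upd b i (Num.min (b ord0 i) c)) +
  boxvol (upd a i (Num.max (a ord0 i) c)) b = boxvol a b.
Proof.
rewrite /boxvol (bigD1 i) //= [X in _ + X](bigD1 i) //= [X in _ = X](bigD1 i) //=.
rewrite !updE !eqxx.
have -> : \prod_(j < n | j != i) Num.max (upd b i (Num.min (b ord0 i) c) ord0 j - a ord0 j) 0
   = \prod_(j < n | j != i) Num.max (b ord0 j - a ord0 j) 0.
  by apply: eq_bigr => j /negPf ji; rewrite updE ji.
have -> : \prod_(j < n | j != i) Num.max (b ord0 j - upd a i (Num.max (a ord0 i) c) ord0 j) 0
   = \prod_(j < n | j != i) Num.max (b ord0 j - a ord0 j) 0.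
  by apply: eq_bigr => j /negPf ji; rewrite updE ji.
rewrite -mulrDl; congr (_ * _).
set A := a ord0 i; set B := b ord0 i.
case: (leP B c) => Bc; case: (leP A c) => Ac; 
  rewrite ?(minEle, maxEle, Bc, Ac, ltW Bc, ltW Ac) /=;
  repeat case: (leP _ _) => ?; lra.
Qed.

Local Open Scope ereal_scope.

Lemma boxpre_split (A : set (Rn R n)) i c :
  boxpre (A `&` hs i c) + boxpre (A `&` ~` hs i c) <= boxpre A.
Proof.
apply: le_ereal_inf_tmp => r [[-> ->]|[a [b [-> ->]]]].
  by rewrite !set0I boxpre0 adde0.
rewrite box_hs box_nhs -(boxvol_split a b i c) EFinD.
by apply: leeD; apply: ereal_inf_lbound; right; do 2 eexists.
Qed.

Lemma hs_cara i c : (@leb_outer R n).-caratheodory (hs i c).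
Proof.
apply: le_caratheodory_measurable => X.
apply: le_ereal_inf_tmp => s [F [_ XF] <-].
have h1 : leb_outer (X `&` hs i c) <= \sum_(k <oo) boxpre (F k `&` hs i c).
  apply: ereal_inf_lbound; exists (fun k => F k `&` hs i c) => //.
  split => // y [/XF [k _ Fy] hy]; by exists k.
have h2 : leb_outer (X `&` ~` hs i c) <= \sum_(k <oo) boxpre (F k `&` ~` hs i c).
  apply: ereal_inf_lbound; exists (fun k => F k `&` ~` hs i c) => //.
  split => // y [/XF [k _ Fy] hy]; by exists k.
apply: le_trans (leeD h1 h2) _.
rewrite -nneseriesD; last 2 first.
- by move=> *; exact: boxpre_ge0.
- by move=> *; exact: boxpre_ge0.
apply: lee_nneseries => k _; last exact: boxpre_split.
by rewrite adde_ge0 // boxpre_ge0.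
Qed.
Lemma hs_meas i c : measurable (hs i c : set (LRn R n)).
Proof. exact: hs_cara. Qed.

Lemma box_meas (a b : 'rV[R]_n) : measurable (box a b : set (LRn R n)).
Proof.
pose G k : set (LRn R n) := if insub k is Some i then
   hs i (b ord0 i) `&` ~` hs i (a ord0 i) else setT.
have -> : box a b = \bigcap_k G k.
  apply/seteqP; split => y.
    move=> H k _; rewrite /G; case: insubP => [i _ _|_] //.
    by have /andP[h1 h2] := H i; split => //=; apply/negP; rewrite -leNgt.
  move=> H i; have := H (val i) Logic.I; rewrite /G valK => -[/= h1].
  by move/negP; rewrite -leNgt => ->.
apply: bigcapT_measurable => k; rewrite /G; case: insubP => [i _ _|_] //.
by apply: measurableI; [exact: hs_meas| apply: measurableC; exact: hs_meas].
Qed.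

Lemma point_null (x : 'rV[R]_n) : (0 < n)%N -> leb_outer [set x] = 0.
Proof.
move=> n0; apply/eqP; rewrite eq_le outer_measure_ge0 andbT.
apply/lee_addgt0Pr => e e0; rewrite add0e.
pose d := Num.min e 1%R.
have d0 : (0 < d)%R by rewrite lt_min e0 ltr01.
pose b : 'rV[R]_n := \row_j (x ord0 j + d)%R.
apply: le_trans (le_outer_measure _ _ (box x b) _) _.
  by move=> y -> j; rewrite mxE lexx ltrDl d0.
apply: le_trans (leb_outer_box _ _) _; rewrite lee_fin /boxvol.
rewrite (eq_bigr (fun _ => d)); last first.
  by move=> j _; rewrite mxE (addrC (x ord0 j)) (addrK (x ord0 j)); apply/max_idPl/ltW.
rewrite prodr_const card_ord.
have d1 : (d <= 1)%R by rewrite ge_min lexx orbT.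
apply: (le_trans (y := d)); last by rewrite ge_min lexx.
case: n n0 => // m _; rewrite exprS; rewrite ler_piMr //; first exact: ltW.
exact: exprn_ile1 (ltW d0) d1.
Qed.

Lemma null_meas (A : set (LRn R n)) : leb_outer A = 0 -> measurable A.
Proof.
move=> A0; apply: le_caratheodory_measurable => X.
change (leb_outer (X `&` A) + leb_outer (X `&` ~` A) <= leb_outer X).
have -> : leb_outer (X `&` A) = 0.
  apply/eqP; rewrite eq_le outer_measure_ge0 andbT -A0.
  by apply: le_outer_measure; apply: subIsetr.
by rewrite add0e; apply: le_outer_measure; apply: subIsetl.
Qed.
Local Close Scope ereal_scope.
Definition cube (k : nat) (z : {ffun 'I_n -> int}) : set (Rn R n) :=
  box (\row_j ((z j)%:~R / k.+1%:R)) (\row_j ((z j + 1)%:~R / k.+1%:R)).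

Lemma open_meas (O : set (LRn R n)) : open (O : set 'rV[R]_n) -> measurable O.
Proof.
move=> oO.
pose F (m : nat) : set (LRn R n) := if unpickle m is Some (k, z) then
  (if `[< cube k z `<=` O >] then cube k z else set0) else set0.
have -> : O = \bigcup_m F m.
  apply/seteqP; split => y; last first.
    move=> [m _]; rewrite /F; case: unpickle => [[k z]|] //.
    by case: asboolP => // H /H.
  move=> Oy.
  have := oO y Oy; move=> /nbhs_ballP [e e0 H].
  have ie0 : (0 <= e^-1) by rewrite invr_ge0 ltW.
  pose k := Num.bound (e^-1).
  have ke : (k.+1%:R^-1 < e).
    rewrite -[e]invrK ltf_pV2 ?posrE ?invr_gt0 ?ltr0n //.
    by apply: (lt_trans (archi_boundP ie0)); rewrite ltr_nat.
  pose z : {ffun 'I_n -> int} := [ffun j => Num.floor (y ord0 j * k.+1%:R)].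
  have kp : (0 < k.+1%:R :> R) by rewrite ltr0n.
  have ycube : cube k z y.
    move=> j; rewrite !mxE ffunE; apply/andP; split.
      by rewrite ler_pdivrMr // floor_le.
    by rewrite ltr_pdivlMr // -floor_lt_int ltrDl.
  have cubeO : cube k z `<=` O.
    move=> w wc; apply: H; split => // i j.
    have -> : i = ord0 by apply/val_inj; case: i => [[|]].
    rewrite -ball_normE /=.
    have := ycube j; have := wc j; rewrite !mxE ffunE.
    set lo := _ / _; set hi := _ / _.
    have hl : hi = lo + k.+1%:R^-1 by rewrite /hi /lo intrD mulrDl mul1r.
    rewrite hl => /andP[h1 h2] /andP[h3 h4]; clearbody lo.
    apply: le_lt_trans ke; rewrite ler_norml.
    move: h1 h2 h3 h4; set d := k.+1%:R^-1; clearbody d.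
    move: (y ord0 j) (w ord0 j) => a b h1 h2 h3 h4.
    apply/andP; split; lra.
  exists (pickle (k, z)) => //.
  rewrite /F pickleK; case: asboolP => // /(_ cubeO) //.
apply: bigcupT_measurable => m; rewrite /F.
case: unpickle => [[k z]|] //; case: asboolP => // _; exact: box_meas.
Qed.
Lemma distE (x y : 'rV[R]_n) :
  eucl_dist x y = Num.sqrt (\sum_(i < n) (x ord0 i - y ord0 i) ^+ 2).
Proof. by rewrite /eucl_dist /enorm; congr Num.sqrt; apply: eq_bigr => i _; rewrite !mxE. Qed.

Lemma dist_ge0 (x y : 'rV[R]_n) : 0 <= eucl_dist x y.
Proof. exact: sqrtr_ge0. Qed.

Lemma dist_gt0 (x y : 'rV[R]_n) : x <> y -> 0 < eucl_dist x y.
Proof.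
move=> xy; rewrite distE sqrtr_gt0.
have [j hj] : exists j, x ord0 j != y ord0 j.
  apply: contrapT => H; apply: xy; apply/rowP => j.
  by apply/eqP; apply: contrapT => hj; apply: H; exists j; apply/negP.
rewrite (bigD1 j) //=.
apply: (lt_le_trans (y := (x ord0 j - y ord0 j) ^+ 2)).
  by rewrite exprn_even_gt0 //= subr_eq0.
by rewrite lerDl; apply: sumr_ge0 => i _; exact: sqr_ge0.
Qed.

Lemma dist_coord (x y : 'rV[R]_n) j : `|x ord0 j - y ord0 j| <= eucl_dist x y.
Proof.
rewrite distE -sqrtr_sqr ler_sqrt; last by apply: sumr_ge0 => i _; exact: sqr_ge0.
rewrite (bigD1 j) //= lerDl.
by apply: sumr_ge0 => i _; exact: sqr_ge0.
Qed.

Lemma dist_le (x y : 'rV[R]_n) r : 0 <= r ->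
  (forall j, `|x ord0 j - y ord0 j| <= r) -> eucl_dist x y <= n%:R * r.
Proof.
move=> r0 H; rewrite distE -(ger0_norm (mulr_ge0 (ler0n _ n) r0)) -sqrtr_sqr.
rewrite ler_sqrt; last exact: sqr_ge0.
apply: (le_trans (y := \sum_(i < n) r ^+ 2)).
  apply: ler_sum => i _; rewrite -real_normK ?num_real //.
  by rewrite lerXn2r ?nnegrE ?normr_ge0.
rewrite sumr_const card_ord exprMn -[r ^+ 2 *+ n]mulr_natl.
apply: ler_pM => //; [exact: sqr_ge0|].
case: (n) => [|m]; first by rewrite expr0n lexx.
by rewrite expr2 ler_peMr ?ler0n // ler1n.
Qed.

Local Open Scope ereal_scope.

Lemma int_lb (A S : set (LRn R n)) (f : LRn R n -> R) (c : R) :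
  measurable S -> S `<=` A -> (0 <= c)%R -> (forall y, 0 <= f y)%R ->
  (forall y, S y -> c <= f y)%R ->
  c%:E * lebesgue_n S <= \int[@lebesgue_n R n]_(y in A) (f y)%:E.
Proof.
move=> mS SA c0 f0 Sf.
rewrite integral_mkcond ge0_integralTE; last first.
  by move=> y; rewrite patchE; case: ifPn => // _; rewrite lee_fin.
pose h := scale_nnsfun (indic_nnsfun R mS) c0.
apply: ereal_sup_ubound; exists h.
  move=> y /=; rewrite patchE measurable_realfun.mindicE.
  case: (boolP (y \in S)) => yS; last by rewrite mulr0; case: ifPn => //; rewrite lee_fin.
  rewrite ifT; last by apply/mem_set/SA/set_mem.
  by rewrite mulr1 lee_fin; apply: Sf; apply/set_mem.
rewrite sintegralrM.
rewrite (_ : sintegral _ _ = lebesgue_n S) //.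
by rewrite -sintegral_indic; congr sintegral; apply/funext => y.
Qed.

End S.

Section G.
Variables (R : realType) (phi : R -> R).
Hypothesis yf : young_function phi.

Lemma phi_pos x : 0 < x -> 0 < phi x.
Proof. by case: yf => _ [_ [_ [h _]]]; apply: h. Qed.

Lemma phi_ge0 x : 0 <= x -> 0 <= phi x.
Proof.
rewrite le_eqVlt => /predU1P[<-|/phi_pos/ltW//].
by case: yf => _ [_ [-> _]].
Qed.

Lemma phi_le x y : 0 <= x -> x <= y -> phi x <= phi y.
Proof.
move=> x0 xy; have y0 : 0 <= y by apply: le_trans xy.
move: y0; rewrite le_eqVlt => /predU1P[y0|y0].
  by have -> : x = y by apply/eqP; rewrite eq_le xy -y0 x0.
case: yf => _ [cv [p0 _]].
have l01 : (0 <= x / y) && (x / y <= 1).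
  apply/andP; split; first by rewrite divr_ge0 // ltW.
  by rewrite ler_pdivrMr // mul1r.
have := cv y 0 (x / y) (ltW y0) (lexx 0) l01.
rewrite mulr0 addr0 p0 mulr0 addr0 divfK ?gt_eqF // => /le_trans; apply.
rewrite -[leRHS]mul1r ler_wpM2r //; first exact: phi_ge0 (ltW y0).
by case/andP: l01.
Qed.
Local Open Scope ereal_scope.

Lemma growth_aux (n : nat) (alpha u lam : R) : (alpha < 0)%R -> (0 < u)%R -> (1 <= lam)%R ->
  ((phi (lam `^ (- alpha) * u) / phi u / (2 * lam) ^+ n.+1 * lam)%:E
    <= Lambda_up n phi alpha).
Proof.
move=> a0 u0 l1.
have l0 : (0 < lam)%R by apply: lt_le_trans l1.
apply: le_trans (ereal_sup_ubound _); last by exists u.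
rewrite integral_mkcond ge0_integralTE; last first.
  move=> t; rewrite patchE; case: ifPn => // /set_mem /=; rewrite in_itv /= andbT => t1.
  have t0 : (0 < t)%R by apply: lt_le_trans t1.
  rewrite lee_fin; apply: divr_ge0; last by apply: exprn_ge0; apply: ltW.
  apply: divr_ge0; last exact/ltW/phi_pos.
  by apply: phi_ge0; rewrite mulr_ge0 ?powR_ge0 // ltW.
pose c := (phi (lam `^ (- alpha) * u) / phi u / (2 * lam) ^+ n.+1)%R.
have c0 : (0 <= c)%R.
  apply: divr_ge0; last by apply: exprn_ge0; rewrite mulr_ge0 // ltW.
  apply: divr_ge0; last exact/ltW/phi_pos.
  by apply: phi_ge0; rewrite mulr_ge0 ?powR_ge0 // ltW.
have mI : measurable (`[lam, (2 * lam)%R]%classic : set (g_sigma_algebraType R.-ocitv.-measurable)) by exact: measurable_itv.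
pose h := scale_nnsfun (indic_nnsfun R mI) c0.
apply: ereal_sup_ubound; exists h.
  move=> t /=; rewrite patchE measurable_realfun.mindicE.
  case: (boolP (t \in `[lam, (2 * lam)%R]%classic)) => tI; last first.
    rewrite mulr0; case: ifPn => // /set_mem /=; rewrite in_itv /= andbT => t1.
    have t0 : (0 < t)%R by apply: lt_le_trans t1.
    rewrite lee_fin; apply: divr_ge0; last by apply: exprn_ge0; apply: ltW.
    apply: divr_ge0; last exact/ltW/phi_pos.
    by apply: phi_ge0; rewrite mulr_ge0 ?powR_ge0 // ltW.
  move: (tI) => /set_mem /=; rewrite in_itv /= => /andP[lt t2].
  have t1 : (1 <= t)%R by apply: le_trans lt.
  have t0 : (0 < t)%R by apply: lt_le_trans t1.
  rewrite ifT; last by apply/mem_set; rewrite /= in_itv /= andbT.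
  rewrite mulr1 lee_fin /c.
  have pu : (0 < phi u)%R by exact: phi_pos.
  apply: ler_pM.
  - apply: divr_ge0; last exact: ltW.
    by apply: phi_ge0; rewrite mulr_ge0 ?powR_ge0 // ltW.
  - by rewrite invr_ge0 exprn_ge0 // mulr_ge0 // ltW.
  - apply: ler_pM => //.
    + by apply: phi_ge0; rewrite mulr_ge0 ?powR_ge0 // ltW.
    + by rewrite invr_ge0 ltW.
    + apply: phi_le; first by rewrite mulr_ge0 ?powR_ge0 // ltW.
      rewrite ler_pM2r //; apply: ge0_ler_powR => //; first by rewrite oppr_ge0 ltW.
      * by rewrite nnegrE ltW.
      * by rewrite nnegrE ltW.
  - rewrite lef_pV2 ?posrE ?exprn_gt0 ?mulr_gt0 //.
    by rewrite lerXn2r ?nnegrE // ltW // mulr_gt0.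
rewrite sintegralrM.
rewrite (_ : sintegral _ _ = lebesgue_measure (`[lam, (2 * lam)%R]%classic : set R)); last first.
  rewrite -sintegral_indic; congr sintegral; apply/funext => x.
rewrite lebesgue_measure_itv /= lte_fin.
rewrite ifT; last by rewrite ltr_pMl // ltr1n.
rewrite -EFinD -EFinM; congr (_%:E); rewrite /c; ring.
Qed.
Local Close Scope ereal_scope.

Lemma growth (n : nat) (alpha : R) : alpha < 0 ->
  (Lambda_up n phi alpha < +oo)%E ->
  exists K : R, 0 < K /\ forall u lam, 0 < u -> 1 <= lam ->
    phi (lam `^ (- alpha) * u) <= K * lam ^+ n * phi u.
Proof.
move=> a0 Lfin.
have e1 := growth_aux n alpha 1 1 a0 ltr01 (lexx 1).
have Lf : Lambda_up n phi alpha \is a fin_num.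
  rewrite fin_numE (lt_eqF Lfin) andbT; apply/negP => /eqP E.
  by move: e1; rewrite E leeNy_eq.
pose L := fine (Lambda_up n phi alpha).
have key u lam : 0 < u -> 1 <= lam ->
    phi (lam `^ (- alpha) * u) / phi u / (2 * lam) ^+ n.+1 * lam <= L.
  move=> u0 l1; rewrite -lee_fin /L fineK //; exact: growth_aux.
exists (L * 2 ^+ n.+1); split.
  have := key 1 1 ltr01 (lexx 1).
  rewrite powR1 mul1r mulr1 divff ?gt_eqF ?phi_pos // mul1r => h.
  rewrite mulr_gt0 ?exprn_gt0 //; apply: lt_le_trans h.
  by rewrite mulr1 invr_gt0 exprn_gt0.
move=> u lam u0 l1.
have l0 : 0 < lam by apply: lt_le_trans l1.
have pu : 0 < phi u by exact: phi_pos.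
have := key u lam u0 l1.
set P := phi _ => h.
have tl : 0 < (2 * lam) ^+ n.+1 by rewrite exprn_gt0 // mulr_gt0.
have -> : P = (P / phi u / (2 * lam) ^+ n.+1 * lam) * (phi u * (2*lam)^+n.+1 / lam).
  by field; rewrite !gt_eqF.
apply: le_trans (ler_wpM2r _ h) _.
  by rewrite divr_ge0 ?mulr_ge0 ?ltW.
rewrite le_eqVlt; apply/orP; left; apply/eqP; rewrite exprMn !exprS.
move: (2 ^+ n) (lam ^+ n) => A B; field; rewrite gt_eqF //.
Qed.
Lemma ptwise (n : nat) (alpha K t d Rr : R) : alpha < 0 -> 0 < K ->
  (forall u lam, 0 < u -> 1 <= lam ->
    phi (lam `^ (- alpha) * u) <= K * lam ^+ n * phi u) ->
  0 < t -> 0 < d -> d <= Rr ->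
  phi (t * Rr `^ (- alpha)) / (K * Rr ^+ (2 * n)) <=
  phi (t * d `^ (- alpha)) / d ^+ (2 * n).
Proof.
move=> a0 K0 G t0 d0 dR.
have R0 : 0 < Rr by apply: lt_le_trans dR.
have u0 : 0 < t * d `^ (- alpha) by rewrite mulr_gt0 // powR_gt0.
have l1 : 1 <= Rr / d by rewrite ler_pdivlMr // mul1r.
have := G _ _ u0 l1.
have -> : (Rr / d) `^ (- alpha) * (t * d `^ (- alpha)) = t * Rr `^ (- alpha).
  rewrite mulrC -mulrA -powRM; [|exact: ltW|by rewrite divr_ge0 // ltW].
  by rewrite (mulrC d) divfK // gt_eqF.
set P := phi _; set Q := phi _ => h.
have Q0 : 0 <= Q by apply: phi_ge0; exact: ltW.
rewrite ler_pdivrMr ?exprn_gt0 //.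
rewrite mulrAC ler_pdivlMr ?exprn_gt0 //.
apply: le_trans (ler_wpM2r _ h) _; first by rewrite exprn_ge0 // ltW.
rewrite expr_div_n mulnC !exprM.
have dn : 0 < d ^+ n by rewrite exprn_gt0.
have Rn : 0 < Rr ^+ n by rewrite exprn_gt0.
have dR' : d ^+ n <= Rr ^+ n by rewrite lerXn2r // nnegrE ltW.
move: dn Rn dR'; move: (d ^+ n) (Rr ^+ n) => A B A0 B0 AB.
rewrite !expr2.
have -> : K * (B / A) * Q * (A * A) = K * Q * B * A by field; rewrite gt_eqF.
have -> : Q * (K * (B * B)) = K * Q * B * B by ring.
apply: ler_wpM2l; first by rewrite !mulr_ge0 // ?(ltW K0) ?(ltW B0).
  exact: AB.
by rewrite mulr_gt0 // exprn_gt0.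
Qed.

End G.

Theorem lemma1p5 (R : realType) (n : nat) (O : set (LRn R n)) (alpha : R)
    (phi : R -> R) :
  (2 <= n)%N -> is_domain O -> globally_regular O ->
  - n%:R < alpha < 0 -> young_function phi ->
  (Lambda_low n phi alpha < +oo)%E -> (Lambda_up n phi alpha < +oo)%E ->
  exists C1 C2 : R, 0 < C1 /\ 0 < C2 /\
    forall (t : R) (x : LRn R n) (E : set (LRn R n)),
      0 < t -> O x -> measurable E -> E `<=` O ->
      (0 < lebesgue_n E)%E -> (lebesgue_n E < +oo)%E ->
      ((C1 * (1 / fine (lebesgue_n E)) * vol_ratio O E
          * phi (C2 * t * fine (lebesgue_n E) `^ (`|alpha| / n%:R)))%:E
       <= \int[@lebesgue_n R n]_(y in O `\` E)
            (phi (t * eucl_dist x y `^ (- alpha)) / eucl_dist x y ^+ (2 * n))%:E)%E.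
Proof.
move=> n2 [_ [oO _]] [th [/andP[th0 th1] reg]] /andP[_ a0] yf _ Lup.
have [K [K0 G]] := @growth R phi yf n alpha a0 Lup.
have n0 : (0 < n)%N by apply: leq_trans n2.
have nR0 : 0 < n%:R :> R by rewrite ltr0n.
pose D := 2 * n%:R ^+ n / th.
have D0 : 0 < D by rewrite divr_gt0 // mulr_gt0 // exprn_gt0.
have aa : `|alpha| = - alpha by rewrite ltr0_norm.
have ma0 : 0 < - alpha by rewrite oppr_gt0.
exists (1 / (K * D ^+ 2)), (D `^ (- alpha / n%:R)).
split; first by rewrite divr_gt0 // mulr_gt0 // exprn_gt0.
split; first by rewrite powR_gt0.
move=> t x E t0 Ox mE EO E0 Efin.
have Ef : lebesgue_n E \is a fin_num by rewrite ge0_fin_numE // ltW.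
set e := fine (lebesgue_n E).
have Ee : lebesgue_n E = e%:E by rewrite fineK.
have e0 : 0 < e by rewrite -lte_fin -Ee.
pose r := (2 * e / th) `^ (n%:R^-1).
have r0 : 0 < r by rewrite powR_gt0 // divr_gt0 // mulr_gt0.
have rn : r ^+ n = 2 * e / th.
  rewrite /r -powR_mulrn ?powR_ge0 // -powRrM mulVf ?gt_eqF // powRr1 //.
  by rewrite divr_ge0 ?mulr_ge0 // ltW.
pose Rr := n%:R * r.
have Rr0 : 0 < Rr by rewrite mulr_gt0.
have RrD : Rr ^+ n = D * e by rewrite /Rr exprMn rn /D; field; rewrite gt_eqF.
have Rra : Rr `^ (- alpha) = D `^ (- alpha / n%:R) * e `^ (- alpha / n%:R).
  rewrite -powRM ?ltW // -RrD -powR_mulrn ?ltW // -powRrM.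
  by rewrite mulrC divfK // gt_eqF.
rewrite aa (_ : _ * t * _ = t * Rr `^ (- alpha)); last by rewrite Rra; ring.
pose f y := phi (t * eucl_dist x y `^ (- alpha)) / eucl_dist x y ^+ (2 * n).
have f0 y : 0 <= f y.
  apply: divr_ge0; last by apply: exprn_ge0; exact: dist_ge0.
  by apply: (@phi_ge0 R phi yf); rewrite mulr_ge0 ?powR_ge0 // ltW.
pose c := phi (t * Rr `^ (- alpha)) / (K * Rr ^+ (2 * n)).
have Pp : 0 < phi (t * Rr `^ (- alpha)).
  by apply: (@phi_pos R phi yf); rewrite mulr_gt0 // powR_gt0.
have c0 : 0 < c by rewrite divr_gt0 // mulr_gt0 // exprn_gt0.
have cf y : 0 < eucl_dist x y <= Rr -> c <= f y.
  by case/andP => d0 dR; apply: (@ptwise R phi yf n alpha K t _ Rr a0 K0 G t0 d0 dR).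
have ce : c = phi (t * Rr `^ (- alpha)) / (K * D ^+ 2 * e ^+ 2).
  by rewrite /c mulnC exprM RrD exprMn mulrA.
have lebU (A B : set (LRn R n)) : (lebesgue_n (A `|` B) <= lebesgue_n A + lebesgue_n B)%E.
  exact: (outer_measureU2 (@leb_outer R n)).
have leble (A B : set (LRn R n)) : A `<=` B -> (lebesgue_n A <= lebesgue_n B)%E.
  exact: (le_outer_measure (@leb_outer R n)).
have leb0 (A : set (LRn R n)) : (0 <= lebesgue_n A)%E.
  exact: (outer_measure_ge0 (@leb_outer R n)).
have px : lebesgue_n [set x] = 0%E by apply: (@point_null R n x n0).
have mx : measurable [set x] by apply: (@null_meas R n); apply: (@point_null R n x n0).
have vr0 : 0 <= vol_ratio O E.
  rewrite /vol_ratio; case: ifPn => // _; apply: divr_ge0; apply: fine_ge0; exact: leb0.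
have vr1 : vol_ratio O E <= 1.
  rewrite /vol_ratio; case: ifPn => // Of.
  have Of' : lebesgue_n (O `\` E) \is a fin_num.
    rewrite ge0_fin_numE ?leb0 //; apply: le_lt_trans (leble _ _ (@subDsetl _ O E)) _.
    by rewrite -ge0_fin_numE ?leb0.
  have := fine_ge0 (leb0 (O `\` E)); rewrite le_eqVlt => /predU1P[<-|p0].
    by rewrite mul0r.
  rewrite ler_pdivrMr ?mul1r; last exact: lt_le_trans p0 (fine_le Of' Of (leble _ _ (@subDsetl _ O E))).
  exact: fine_le Of' Of (leble _ _ (@subDsetl _ O E)).
case: (boolP (r%:E < 2%:E * ediam O)%E) => hr.
  have h := reg x Ox r r0 hr; rewrite rn mulrC divfK ?gt_eqF // in h.
  pose Q := box (\row_j (x ord0 j - r)) (\row_j (x ord0 j + r)).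
  have BQ : eball x r `<=` Q.
    move=> y /= dxy j; rewrite !mxE; have := @dist_coord R n x y j.
    move=> /le_lt_trans /(_ dxy); rewrite ltr_norml => /andP[h1 h2].
    apply/andP; split; [rewrite lerBlDr -lerBlDl; apply: ltW| rewrite -ltrBlDl]; lra.
  pose S := ((O `&` Q) `\` E) `\` [set x].
  have mS : measurable S.
    apply: measurableD => //; apply: measurableD => //.
    by apply: measurableI; [exact: (@open_meas R n O oO) | exact: (@box_meas R n)].
  have hS : (e%:E <= lebesgue_n S)%E.
    have : (lebesgue_n (O `&` Q) <= lebesgue_n S + (lebesgue_n E + lebesgue_n [set x]))%E.
      apply: le_trans (leble _ (S `|` (E `|` [set x])) _) _.
        move=> y [Oy Qy]; case: (pselect (E y)) => Ey; first by right; left.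
        by case: (pselect (y = x)) => yx; [right; right|left].
      apply: le_trans (lebU _ _) _; apply: leeD2l; exact: lebU.
    rewrite Ee px adde0 => h2.
    have h3 : ((2 * e)%:E <= lebesgue_n S + e%:E)%E.
      apply: le_trans h (le_trans (leble _ _ _) h2).
      by move=> y [/BQ Qy Oy].
    rewrite -(leeD2rE (x:=e%:E)) //; apply: le_trans h3.
    by rewrite -EFinD lee_fin; lra.
  have Sd y : S y -> 0 < eucl_dist x y <= Rr.
    move=> [[[Oy Qy] _] yx]; apply/andP; split.
      by apply: (@dist_gt0 R n) => xy; apply: yx; rewrite xy.
    apply: (@dist_le R n); first exact: ltW.
    move=> j; have := Qy j; rewrite !mxE ler_norml => /andP[h1 h2].
    apply/andP; split; lra.
  apply: le_trans (@int_lb R n _ _ _ _ mS _ (ltW c0) f0 _); last 2 first.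
  - by move=> y [[[Oy _] Ey] _]; split.
  - by move=> y /Sd; exact: cf.
  apply: le_trans (lee_wpmul2l _ hS); last by rewrite lee_fin ltW.
  rewrite lee_fin ce.
  set P := phi _.
  have -> : P / (K * D ^+ 2 * e ^+ 2) * e = 1 / (K * D ^+ 2) * (1 / e) * 1 * P.
    by field; rewrite !gt_eqF.
  have k1 : 0 <= 1 / (K * D ^+ 2) * (1 / e).
    apply: mulr_ge0; apply: divr_ge0 => //; last exact: ltW.
    by apply: mulr_ge0; [exact: ltW| apply: exprn_ge0; exact: ltW].
  apply: ler_pM => //.
  - by rewrite mulr_ge0.
  - exact: ltW.
  - by apply: ler_pM => //; exact: lexx.
have hd : (2%:E * ediam O <= r%:E)%E by rewrite leNgt.
have Od y : O y -> eucl_dist x y <= Rr.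
  move=> Oy.
  have h1 : ((eucl_dist x y)%:E <= ediam O)%E.
    by apply: ereal_sup_ubound; exists x => //; exists y.
  have : (2%:E * (eucl_dist x y)%:E <= r%:E)%E.
    apply: le_trans hd; apply: lee_wpmul2l => //; by rewrite lee_fin.
  rewrite -EFinM lee_fin => h2.
  have := @dist_ge0 R n x y => dg.
  rewrite /Rr; apply: (le_trans (y := r)); first lra.
  by rewrite ler_peMl ?(ltW r0) // ler1n.
pose S := (O `\` E) `\` [set x].
have mS : measurable S.
  apply: measurableD => //; apply: measurableD => //; exact: (@open_meas R n O oO).
have hS : (lebesgue_n (O `\` E) <= lebesgue_n S)%E.
  apply: le_trans (leble _ (S `|` [set x]) _) _.
    by move=> z [Oz Ez]; case: (pselect (z = x)) => zx; [right|left].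
  by apply: le_trans (lebU _ _) _; rewrite px adde0.
have Sd y : S y -> 0 < eucl_dist x y <= Rr.
  move=> [[Oy _] yx]; apply/andP; split; last exact: Od.
  by apply: (@dist_gt0 R n) => xy; apply: yx; rewrite xy.
apply: le_trans (@int_lb R n _ _ _ _ mS _ (ltW c0) f0 _); last 2 first.
- by move=> y [[Oy Ey] _]; split.
- by move=> y /Sd; exact: cf.
have OEs : (lebesgue_n O <= lebesgue_n (O `\` E) + lebesgue_n E)%E.
  apply: le_trans (leble _ ((O `\` E) `|` E) _) (lebU _ _).
  by move=> y Oy; case: (pselect (E y)) => Ey; [right|left].
rewrite /vol_ratio; case: ifPn => Of; last first.
  have OEinf : lebesgue_n (O `\` E) = +oo%E.
    apply: contrapT => hf.
    have : (lebesgue_n (O `\` E) + lebesgue_n E)%E \is a fin_num.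
      rewrite fin_numD Ef andbT ge0_fin_numE ?leb0 //.
      by rewrite lt_neqAle leey andbT; apply/eqP.
    rewrite ge0_fin_numE ?adde_ge0 ?leb0 // => hlt.
    move: Of; rewrite ge0_fin_numE ?leb0 // => /negP; apply.
    exact: le_lt_trans OEs hlt.
  have : lebesgue_n S = +oo%E by apply/eqP; rewrite eq_le leey /= -OEinf.
  by move=> ->; rewrite gt0_muley ?lte_fin // leey.
have Of' : lebesgue_n (O `\` E) \is a fin_num.
  rewrite ge0_fin_numE ?leb0 //; apply: le_lt_trans (leble _ _ (@subDsetl _ O E)) _.
  by rewrite -ge0_fin_numE ?leb0.
apply: le_trans (lee_wpmul2l _ hS); last by rewrite lee_fin ltW.
rewrite -(fineK Of') -EFinM lee_fin ce.
have eM : e <= fine (lebesgue_n O) by apply: fine_le => //; exact: leble.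
set m := fine (lebesgue_n (O `\` E)); set M := fine (lebesgue_n O).
have m0 : 0 <= m by apply: fine_ge0; exact: leb0.
have M0 : 0 < M by apply: lt_le_trans eM.
set P := phi _.
have -> : 1 / (K * D ^+ 2) * (1 / e) * (m / M) * P = (P / (K * D ^+ 2 * e ^+ 2) * m) * (e / M).
  by field; rewrite !gt_eqF.
rewrite -[leRHS]mulr1; apply: ler_pM => //.
- apply: mulr_ge0 => //; apply: divr_ge0; first exact: ltW.
  by apply: mulr_ge0; [apply: mulr_ge0; [exact: ltW|apply: exprn_ge0; exact: ltW]|exact: exprn_ge0 (ltW e0)].
- by apply: divr_ge0; apply: ltW.
- by rewrite ler_pdivrMr // mul1r.
Qed.
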